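(* Let $n\geq 3$, $k\in\mathbb{Z}_n$ with $k\neq 0$ and $2k\not\equiv 0\pmod n$, and let $b\in\{1,2,3\}$. Let $C$ be a $(1,b)$-regular set of $\mathrm{GP}(n,k)$. Then $$|E(C)\cap E(U)|=|E(C)\cap E(V)|\quad\text{and}\quad 2|E(C)\cap E(U)|+|E(C)\cap E(U,V)|=\frac{bn}{2+b}.$$
   Context: For an integer $n\geq 3$ and a nonzero $k\in\mathbb{Z}_n$, the generalized Petersen graph $\mathrm{GP}(n,k)$ is the simple graph with vertex set $\{u_i,v_i\mid i\in\mathbb{Z}_n\}$ and edges $u_iu_{i+1}$, $u_iv_i$, $v_iv_{i+k}$ for all $i\in\mathbb{Z}_n$ (indices modulo $n$); with $2k\not\equiv0\pmod n$ it is 3-regular. Let $U=\{u_i\mid i\in\mathbb{Z}_n\}$ and $V=\{v_i\mid i\in\mathbb{Z}_n\}$. For subsets $A,B$ of vertices, $E(A,B)$ denotes the set of edges with one end in $A$ and the other in $B$, and $E(A)=E(A,A)$ is the set of edges with both ends in $A$. For nonnegative integers $a,b$, a set $C$ of vertices of a graph $\Gamma$ is an $(a,b)$-regular set if the subgraph induced by $C$ is $a$-regular and every vertex of $V(\Gamma)\setminus C$ is adjacent to exactly $b$ vertices of $C$. *)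

(* Defs.v *)
From mathcomp Require Import all_boot all_order all_algebra.
Unset Printing Implicit Defensive.

(* Vertices of GP(n,k): inl i = u_i, inr i = v_i, for i in Z_n = 'I_n. *)
Definition gpv (n : nat) : finType := ('I_n + 'I_n)%type.

Definition gp_adj (n k : nat) (x y : gpv n) : bool :=
  match x, y with
  | inl i, inl j => (val j == (val i + 1) %% n) || (val i == (val j + 1) %% n)
  | inr i, inr j => (val j == (val i + k) %% n) || (val i == (val j + k) %% n)
  | inl i, inr j => i == j
  | inr i, inl j => i == j
  end.

Definition Uset (n : nat) : {set gpv n} := [set x | is_inl x].
Definition Vset (n : nat) : {set gpv n} := [set x | ~~ is_inl x].

Definition gp_edges (n k : nat) : {set {set gpv n}} :=
  [set e : {set gpv n} | [exists x, exists y, (e == [set x; y]) && gp_adj n k x y]].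

Definition Eab (n k : nat) (A B : {set gpv n}) : {set {set gpv n}} :=
  [set e in gp_edges n k |
     [exists x in A, exists y in B, (e == [set x; y]) && gp_adj n k x y]].

Definition Ein (n k : nat) (A : {set gpv n}) := Eab n k A A.

Definition regular_set (n k a b : nat) (C : {set gpv n}) : Prop :=
  (forall x, x \in C -> #|[set y in C | gp_adj n k x y]| = a) /\
  (forall x, x \notin C -> #|[set y in C | gp_adj n k x y]| = b).

(* Main.v *)
Require Import Defs.
From mathcomp Require Import all_boot all_order all_algebra zify.
Import GRing.Theory Num.Theory.

Lemma mod_lt2 n x : x < 2 * n -> x %% n = if x < n then x else x - n.
Proof.
move=> h; case: ifP => hx; first by rewrite modn_small.
have e : x = (x - n) + n by lia.
rewrite {1}e modnDr modn_small //; lia.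
Qed.

Lemma cE (U : finType) (D : {set U}) (P : pred U) :
  #|[set y in D | P y]| = \sum_(y in D) (P y : nat).
Proof.
rewrite -sum1_card big_mkcond [RHS]big_mkcond /=; apply: eq_bigr => y _.
by rewrite inE; case: (y \in D); case: (P y).
Qed.

Lemma dcount (T S : finType) (A : {set T}) (B : {set S}) (R : T -> S -> bool) :
  \sum_(x in A) #|[set y in B | R x y]| = \sum_(y in B) #|[set x in A | R x y]|.
Proof.
under eq_bigr do rewrite cE. under [RHS]eq_bigr do rewrite cE.
exact: exchange_big.
Qed.

Lemma sum_ind (T : finType) (A B : {set T}) :
  \sum_(x in A) (x \in B : nat) = #|A :&: B|.
Proof.
rewrite -cE; congr #|_|; apply/setP => x; by rewrite !inE.
Qed.

Lemma two_elts (T : finType) (a b x y : T) : a != b ->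
  a \in [set x; y] -> b \in [set x; y] -> (a == x) && (b == y) || (a == y) && (b == x).
Proof.
move=> nab; rewrite !inE; case/orP=> /eqP ea; case/orP=> /eqP eb; subst;
  rewrite ?eqxx ?orbT //; by rewrite eqxx in nab.
Qed.

Lemma card_pair (T : finType) (S : {set T}) a b : a != b ->
  #|[set x in S | x \in [set a; b]]| = (a \in S) + (b \in S).
Proof.
move=> nab; case aS: (a \in S); case bS: (b \in S).
- rewrite (_ : [set _ in _ | _] = [set a; b]) ?cards2 ?nab //.
  apply/setP => x; rewrite !inE; have nba : b != a by rewrite eq_sym.
  case: (eqVneq x a) => [->|xa]; rewrite ?eqxx ?(negbTE nab) ?aS ?bS ?andbF ?andbT //;
  case: (eqVneq x b) => [->|xb]; rewrite ?eqxx ?(negbTE nba) ?(negbTE xa) ?(negbTE xb) ?aS ?bS ?andbF ?andbT //.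
- rewrite (_ : [set _ in _ | _] = [set a]) ?cards1 //.
  apply/setP => x; rewrite !inE; have nba : b != a by rewrite eq_sym.
  case: (eqVneq x a) => [->|xa]; rewrite ?eqxx ?(negbTE nab) ?aS ?bS ?andbF ?andbT //;
  case: (eqVneq x b) => [->|xb]; rewrite ?eqxx ?(negbTE nba) ?(negbTE xa) ?(negbTE xb) ?aS ?bS ?andbF ?andbT // ?(negbTE nab).
- rewrite (_ : [set _ in _ | _] = [set b]) ?cards1 //.
  apply/setP => x; rewrite !inE; have nba : b != a by rewrite eq_sym.
  case: (eqVneq x a) => [->|xa]; rewrite ?eqxx ?(negbTE nab) ?aS ?bS ?andbF ?andbT //;
  case: (eqVneq x b) => [->|xb]; rewrite ?eqxx ?(negbTE nba) ?(negbTE xa) ?(negbTE xb) ?aS ?bS ?andbF ?andbT // ?(negbTE nab) // eq_sym.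
- rewrite (_ : [set _ in _ | _] = set0) ?cards0 //.
  apply/setP => x; rewrite !inE; have nba : b != a by rewrite eq_sym.
  case: (eqVneq x a) => [->|xa]; rewrite ?eqxx ?(negbTE nab) ?aS ?bS ?andbF ?andbT //;
  case: (eqVneq x b) => [->|xb]; rewrite ?eqxx ?(negbTE nba) ?(negbTE xa) ?(negbTE xb) ?aS ?bS ?andbF ?andbT //.
Qed.

Lemma adj_sym n k x y : gp_adj n k x y = gp_adj n k y x.
Proof. by case: x; case: y => i j /=; rewrite 1?orbC // eq_sym. Qed.

Lemma adj_irr n k x : 3 <= n -> 0 < k < n -> gp_adj n k x x = false.
Proof.
move=> hn hk; case: x => i /=; have hi := ltn_ord i.
- rewrite orbb (mod_lt2 n (i + 1)); last by lia.
  case: ifP => ?; lia.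
- rewrite orbb (mod_lt2 n (i + k)); last by lia.
  case: ifP => ?; lia.
Qed.

Lemma eq_inl n (p q : 'I_n) : (inl p == inl q :> gpv n) = (val p == val q).
Proof. by []. Qed.
Lemma eq_inr n (p q : 'I_n) : (inr p == inr q :> gpv n) = (val p == val q).
Proof. by []. Qed.

Lemma degU_inl n k (i : 'I_n) : 3 <= n ->
  #|[set x in Uset n | gp_adj n k (inl i) x]| = 2.
Proof.
move=> hn; have hi := ltn_ord i.
have np : 0 < n by lia.
pose a : 'I_n := Ordinal (ltn_pmod (i + 1) np).
pose c : 'I_n := Ordinal (ltn_pmod (i + n - 1) np).
have -> : [set x in Uset n | gp_adj n k (inl i) x] = [set inl a; inl c].
  apply/setP => x; case: x => j; rewrite !inE //=.
  have hj := ltn_ord j.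
  rewrite ?eq_inl ?eq_inr /=.
  rewrite (mod_lt2 n (i + 1)); last by lia.
  rewrite (mod_lt2 n (j + 1)); last by lia.
  rewrite (mod_lt2 n (i + n - 1)); last by lia.
  do 3 case: ifP => ?; lia.
rewrite cards2 ?eq_inl ?eq_inr /=.
rewrite (mod_lt2 n (i + 1)); last by lia.
rewrite (mod_lt2 n (i + n - 1)); last by lia.
do 2 case: ifP => ?; lia.
Qed.

Lemma degV_inr n k (i : 'I_n) : 3 <= n -> 0 < k < n -> (2 * k) %% n != 0 ->
  #|[set x in Vset n | gp_adj n k (inr i) x]| = 2.
Proof.
move=> hn hk h2; have hi := ltn_ord i.
have np : 0 < n by lia.
have h2' : 2 * k != n.
  move: h2; rewrite (mod_lt2 n (2 * k)); last by lia.
  case: ifP => ?; lia.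
pose a : 'I_n := Ordinal (ltn_pmod (i + k) np).
pose c : 'I_n := Ordinal (ltn_pmod (i + n - k) np).
have -> : [set x in Vset n | gp_adj n k (inr i) x] = [set inr a; inr c].
  apply/setP => x; case: x => j; rewrite !inE //=.
  have hj := ltn_ord j.
  rewrite ?eq_inl ?eq_inr /=.
  rewrite (mod_lt2 n (i + k)); last by lia.
  rewrite (mod_lt2 n (j + k)); last by lia.
  rewrite (mod_lt2 n (i + n - k)); last by lia.
  do 3 case: ifP => ?; lia.
rewrite cards2 ?eq_inl ?eq_inr /=.
rewrite (mod_lt2 n (i + k)); last by lia.
rewrite (mod_lt2 n (i + n - k)); last by lia.
do 2 case: ifP => ?; lia.
Qed.

Lemma degV_inl n k (i : 'I_n) : #|[set x in Vset n | gp_adj n k (inl i) x]| = 1.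
Proof.
rewrite (_ : [set _ in _ | _] = [set inr i]) ?cards1 //.
by apply/setP => x; case: x => j; rewrite !inE //= eq_sym.
Qed.

Lemma degU_inr n k (i : 'I_n) : #|[set x in Uset n | gp_adj n k (inr i) x]| = 1.
Proof.
rewrite (_ : [set _ in _ | _] = [set inl i]) ?cards1 //.
by apply/setP => x; case: x => j; rewrite !inE //= eq_sym.
Qed.

Lemma cardU n : #|Uset n| = n.
Proof.
have -> : Uset n = inl @: [set: 'I_n].
  apply/setP => x; case: x => i; rewrite !inE.
    by apply/esym/imsetP; exists i; rewrite ?inE.
  by apply/esym/negP => /imsetP [j _].
by rewrite card_imset ?cardsT ?card_ord // => x y [].
Qed.

Lemma cardV n : #|Vset n| = n.
Proof.
have -> : Vset n = inr @: [set: 'I_n].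
  apply/setP => x; case: x => i; rewrite !inE /=.
    by apply/esym/negP => /imsetP [j _].
  by apply/esym/imsetP; exists i; rewrite ?inE.
by rewrite card_imset ?cardsT ?card_ord // => x y [].
Qed.

Lemma inEab n k A B e : (e \in Eab n k A B) =
  [exists x in A, exists y in B, (e == [set x; y]) && gp_adj n k x y].
Proof.
rewrite inE andb_idl // => /exists_inP [x _ /exists_inP [y _ /andP [h1 h2]]].
rewrite inE; apply/existsP; exists x; apply/existsP; exists y; by rewrite h1 h2.
Qed.

Lemma memEab2 n k A B a b : (forall x, gp_adj n k x x = false) ->
  gp_adj n k a b ->
  ([set a; b] \in Eab n k A B) = (a \in A) && (b \in B) || (b \in A) && (a \in B).
Proof.
move=> irr hab; have nab : a != b by apply/eqP => e; rewrite e irr in hab.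
rewrite inEab; apply/idP/idP.
- case/exists_inP => x xA /exists_inP [y yB /andP [/eqP e hxy]].
  have := @two_elts _ a b x y nab; rewrite -e set21 set22 => /(_ isT isT).
  by case/orP => /andP [/eqP -> /eqP ->]; rewrite xA yB ?orbT.
- case/orP => /andP [aA bB]; apply/exists_inP.
    by exists a => //; apply/exists_inP; exists b; rewrite // eqxx hab.
  exists b => //; apply/exists_inP; exists a; rewrite // adj_sym hab andbT.
  by rewrite setUC.
Qed.

Lemma inEC n k (C : {set gpv n}) e : e \in Ein n k C ->
  exists a b, [/\ a \in C, b \in C, e = [set a; b] & gp_adj n k a b].
Proof.
rewrite /Ein inEab => /exists_inP [a aC /exists_inP [b bC /andP [/eqP -> h]]].
by exists a, b.
Qed.

Lemma deg_C n k (C : {set gpv n}) c : (forall x, gp_adj n k x x = false) ->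
  (forall x, x \in C -> #|[set y in C | gp_adj n k x y]| = 1) ->
  c \in C -> #|[set e in Ein n k C | c \in e]| = 1.
Proof.
move=> irr h1 cC.
have /eqP /cards1P [y hy] := h1 c cC.
have : y \in [set y0 in C | gp_adj n k c y0] by rewrite hy set11.
rewrite inE => /andP [yC hcy].
apply/eqP/cards1P; exists [set c; y]; apply/setP => e; rewrite in_set in_set1.
apply/idP/idP.
- case/andP => /inEC [a [b [aC bC -> hab]]].
  rewrite !inE => /orP [/eqP ca | /eqP cb].
  + subst a.
    have : b \in [set y0 in C | gp_adj n k c y0] by rewrite inE bC hab.
    by rewrite hy inE => /eqP ->.
  + subst b.
    have : a \in [set y0 in C | gp_adj n k c y0] by rewrite inE aC adj_sym hab.
    by rewrite hy inE => /eqP ->; rewrite setUC.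
- move/eqP ->; rewrite set21 andbT /Ein memEab2 //.
  by rewrite cC yC.
Qed.

Lemma cntU n k (C : {set gpv n}) : (forall x, gp_adj n k x x = false) ->
  (forall x, x \in C -> #|[set y in C | gp_adj n k x y]| = 1) ->
  #|C :&: Uset n| = #|Ein n k C :&: Ein n k (Uset n)| + #|Ein n k C :&: Ein n k (Uset n)|
     + #|Ein n k C :&: Eab n k (Uset n) (Vset n)|.
Proof.
move=> irr h1; rewrite -sum1_card.
transitivity (\sum_(c in C :&: Uset n) #|[set e in Ein n k C | c \in e]|).
  by apply: eq_bigr => c; rewrite inE => /andP [cC _]; rewrite deg_C.
rewrite (dcount _ _ (C :&: Uset n) (Ein n k C) (fun c e => c \in e)).
rewrite -!sum_ind -!big_split /=.
apply: eq_bigr => e /inEC [a [b [aC bC -> hab]]].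
have nab : a != b by apply/eqP => eab; rewrite eab irr in hab.
rewrite (card_pair _ _ _ _ nab) /Ein !memEab2 // !inE aC bC /=.
by case: (is_inl a); case: (is_inl b).
Qed.

Lemma cntV n k (C : {set gpv n}) : (forall x, gp_adj n k x x = false) ->
  (forall x, x \in C -> #|[set y in C | gp_adj n k x y]| = 1) ->
  #|C :&: Vset n| = #|Ein n k C :&: Ein n k (Vset n)| + #|Ein n k C :&: Ein n k (Vset n)|
     + #|Ein n k C :&: Eab n k (Uset n) (Vset n)|.
Proof.
move=> irr h1; rewrite -sum1_card.
transitivity (\sum_(c in C :&: Vset n) #|[set e in Ein n k C | c \in e]|).
  by apply: eq_bigr => c; rewrite inE => /andP [cC _]; rewrite deg_C.
rewrite (dcount _ _ (C :&: Vset n) (Ein n k C) (fun c e => c \in e)).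
rewrite -!sum_ind -!big_split /=.
apply: eq_bigr => e /inEC [a [b [aC bC -> hab]]].
have nab : a != b by apply/eqP => eab; rewrite eab irr in hab.
rewrite (card_pair _ _ _ _ nab) /Ein !memEab2 // !inE aC bC /=.
by case: (is_inl a); case: (is_inl b).
Qed.

Lemma sumU n k b (C : {set gpv n}) : 3 <= n ->
  (forall x, x \in C -> #|[set y in C | gp_adj n k x y]| = 1) ->
  (forall x, x \notin C -> #|[set y in C | gp_adj n k x y]| = b) ->
  #|Uset n :&: C| + b * #|Uset n :&: ~: C| = #|C :&: Uset n| + #|C :&: Uset n| + #|C :&: Vset n|.
Proof.
move=> hn h1 h2.
transitivity (\sum_(x in Uset n) #|[set y in C | gp_adj n k x y]|).
  rewrite -!sum_ind big_distrr -big_split /=; apply: eq_bigr => x _.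
  rewrite in_setC; case xC: (x \in C) => /=.
    by rewrite h1 // muln0 addn0.
  by rewrite h2 ?xC // muln1.
rewrite (dcount _ _ (Uset n) C (gp_adj n k)) -!sum_ind -!big_split /=.
apply: eq_bigr => y yC.
rewrite (_ : [set x in Uset n | gp_adj n k x y] = [set x in Uset n | gp_adj n k y x]);
  last by apply/setP => x; rewrite !inE adj_sym.
by case: y yC => i yC; rewrite ?degU_inl ?degU_inr // !inE.
Qed.

Lemma sumV n k b (C : {set gpv n}) : 3 <= n -> 0 < k < n -> (2 * k) %% n != 0 ->
  (forall x, x \in C -> #|[set y in C | gp_adj n k x y]| = 1) ->
  (forall x, x \notin C -> #|[set y in C | gp_adj n k x y]| = b) ->
  #|Vset n :&: C| + b * #|Vset n :&: ~: C| = #|C :&: Vset n| + #|C :&: Vset n| + #|C :&: Uset n|.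
Proof.
move=> hn hk hk2 h1 h2.
transitivity (\sum_(x in Vset n) #|[set y in C | gp_adj n k x y]|).
  rewrite -!sum_ind big_distrr -big_split /=; apply: eq_bigr => x _.
  rewrite in_setC; case xC: (x \in C) => /=.
    by rewrite h1 // muln0 addn0.
  by rewrite h2 ?xC // muln1.
rewrite (dcount _ _ (Vset n) C (gp_adj n k)) -!sum_ind -!big_split /=.
apply: eq_bigr => y yC.
rewrite (_ : [set x in Vset n | gp_adj n k x y] = [set x in Vset n | gp_adj n k y x]);
  last by apply/setP => x; rewrite !inE adj_sym.
by case: y yC => i yC; rewrite ?degV_inl ?degV_inr // !inE.
Qed.

Theorem lemma4p1 (n : nat) (k : 'I_n) (b : nat) (C : {set gpv n}) :
  3 <= n -> (0 < val k)%N -> (2 * val k) %% n != 0 ->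
  (1 <= b <= 3)%N ->
  regular_set n (val k) 1 b C ->
  #|Ein n (val k) C :&: Ein n (val k) (Uset n)| = #|Ein n (val k) C :&: Ein n (val k) (Vset n)|
  /\
  ((2 * #|Ein n (val k) C :&: Ein n (val k) (Uset n)|
     + #|Ein n (val k) C :&: Eab n (val k) (Uset n) (Vset n)|)%:R : rat)
    = ((b * n)%:R / (2 + b)%:R)%R.
Proof.
move=> hn hk hk2 hb [h1 h2].
have hk' : 0 < val k < n by rewrite hk ltn_ord.
have irr : forall x, gp_adj n (val k) x x = false by move=> x; apply: adj_irr.
have cu := cntU _ _ _ irr h1; have cv := cntV _ _ _ irr h1.
have su := sumU _ _ _ _ hn h1 h2; have sv := sumV _ _ _ _ hn hk' hk2 h1 h2.
have iu := cardsID C (Uset n); rewrite setDE cardU in iu.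
have iv := cardsID C (Vset n); rewrite setDE cardV in iv.
rewrite setIC in iu su; rewrite setIC in iv sv.
set x := #|Ein n (val k) C :&: Ein n (val k) (Uset n)| in cu *.
set y := #|Ein n (val k) C :&: Ein n (val k) (Vset n)| in cv *.
set z := #|Ein n (val k) C :&: Eab n (val k) (Uset n) (Vset n)| in cu cv *.
have [e1 e2] : x = y /\ (2 + b) * (2 * x + z) = b * n.
  case/andP: hb => hb1 hb3.
  have : b = 1 \/ b = 2 \/ b = 3 by lia.
  case=> [eb|[eb|eb]]; subst b; lia.
split=> //.
by rewrite -e2 natrM [X in (X / _)%R]mulrC mulfK // pnatr_eq0.
Qed.
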